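(* Let $\langle\mathfrak B,\varphi,(Y,\mathbb S,\sigma)\rangle$ be a linear cocycle with finite-dimensional Banach fibre $\mathfrak B$. Then for every $y\in Y$ there exists a constant $L>0$ such that $|\varphi(t,u,y)|\le L|u|$ for all $t\in\mathbb T$, $t\ge0$, and all $u\in\mathfrak B^+_y:=\{u\in\mathfrak B:\ \sup_{t\ge0}|\varphi(t,u,y)|<+\infty\}$.
   Context: $\mathbb S$ is $\mathbb R$ or $\mathbb Z$, $\mathbb T$ is a sub-semigroup of $\mathbb S$ containing $\mathbb S_+=\{s\in\mathbb S: s\ge0\}$, and $(Y,\mathbb S,\sigma)$ is a dynamical system on a metric space $Y$. A linear cocycle over $(Y,\mathbb S,\sigma)$ with fibre the Banach space $(\mathfrak B,|\cdot|)$ is a continuous map $\varphi:\mathbb T\times\mathfrak B\times Y\to\mathfrak B$ with $\varphi(0,u,y)=u$, $\varphi(t+\tau,u,y)=\varphi(t,\varphi(\tau,u,y),\sigma(\tau,y))$ for all $t,\tau\in\mathbb T$, $u\in\mathfrak B$, $y\in Y$, and such that $\varphi(t,\cdot,y)$ is linear for every $(t,y)$. *)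

(* Defs.v *)
From HB Require Import structures.
From mathcomp Require Import all_boot all_order all_algebra.
From mathcomp Require Import all_classical all_reals all_analysis.
Set Implicit Arguments. Unset Strict Implicit. Unset Printing Implicit Defensive.
Import Order.TTheory GRing.Theory Num.Theory.
Import numFieldNormedType.Exports.
Local Open Scope classical_set_scope.
Local Open Scope ring_scope.

(* All times are represented as real numbers.  The time set S is either
   the whole real line (S = R) or the integers embedded in R (S = Z). *)
Definition is_time_set (R : realType) (S : set R) : Prop :=
  S = setT \/ S = range (fun n : int => (n%:~R : R)).

Definition is_time_semigroup (R : realType) (S T : set R) : Prop :=
  T `<=` S /\ (forall t tau, T t -> T tau -> T (t + tau)) /\
  [set s | S s /\ 0 <= s] `<=` T.

Definition dynamical_system (R : realType) (S : set R) (Y : topologicalType)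
  (sigma : R -> Y -> Y) : Prop :=
  {within S `*` [set: Y], continuous (fun p : R * Y => sigma p.1 p.2)} /\
  (forall y, sigma 0 y = y) /\
  (forall t tau y, S t -> S tau -> sigma (t + tau) y = sigma t (sigma tau y)).

Definition linear_cocycle (R : realType) (T : set R) (Y : topologicalType)
  (sigma : R -> Y -> Y) (B : normedModType R) (phi : R -> B -> Y -> B) : Prop :=
  {within T `*` [set: B] `*` [set: Y],
     continuous (fun p : R * B * Y => phi p.1.1 p.1.2 p.2)} /\
  (forall u y, phi 0 u y = u) /\
  (forall t tau u y, T t -> T tau ->
      phi (t + tau) u y = phi t (phi tau u y) (sigma tau y)) /\
  (forall t y, T t -> forall (a : R) (u v : B),
      phi t (a *: u + v) y = a *: phi t u y + phi t v y).

Definition finite_dimensional (R : realType) (B : normedModType R) : Prop :=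
  exists (n : nat) (e : 'I_n -> B), forall u : B,
    exists c : 'I_n -> R, u = \sum_(i < n) c i *: e i.

Definition bounded_forward_set (R : realType) (T : set R) (Y : Type)
  (B : normedModType R) (phi : R -> B -> Y -> B) (y : Y) : set B :=
  [set u | exists M : R, forall t, T t -> 0 <= t -> `|phi t u y| <= M].

(* Main.v *)
Require Import Defs.
From HB Require Import structures.
From mathcomp Require Import all_boot all_order all_algebra.
From mathcomp Require Import all_classical all_reals all_analysis.
Import Order.TTheory GRing.Theory Num.Theory.
Import numFieldNormedType.Exports.
Local Open Scope classical_set_scope.
Local Open Scope ring_scope.
Set Implicit Arguments. Unset Strict Implicit.

Fixpoint lc {R : realType} {B : normedModType R} (c : nat -> R) (s : seq B) : B :=
  match s with
  | [::] => 0
  | x :: s' => c 0%N *: x + lc (fun i => c i.+1) s'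
  end.

Definition spn {R : realType} {B : normedModType R} (s : seq B) : set B :=
  [set u | exists c, u = lc c s].

Lemma lc_lin (R : realType) (B : normedModType R) (s : seq B) (a : R) c1 c2 :
  lc (fun i => a * c1 i + c2 i) s = a *: lc c1 s + lc c2 s.
Proof.
elim: s c1 c2 => [|x s IH] c1 c2 /=; first by rewrite scaler0 addr0.
rewrite IH scalerDl scalerDr -scalerA; set p := _ *: x; set q := _ *: x.
set r := _ *: lc _ _; set w := lc _ _.
by rewrite -!addrA; congr (_ + _); rewrite addrCA.
Qed.

Lemma lc0 (R : realType) (B : normedModType R) (s : seq B) :
  lc (fun _ => 0) s = 0.
Proof.
elim: s => [|x s IH] //=; by rewrite IH scale0r addr0.
Qed.

Lemma spn0 (R : realType) (B : normedModType R) (s : seq B) : spn s 0.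
Proof. by exists (fun _ => 0); rewrite lc0. Qed.

Lemma spnL (R : realType) (B : normedModType R) (s : seq B) a u v :
  spn s u -> spn s v -> spn s (a *: u + v).
Proof.
move=> [c1 ->] [c2 ->]; exists (fun i => a * c1 i + c2 i); by rewrite lc_lin.
Qed.

Lemma spnD (R : realType) (B : normedModType R) (s : seq B) u v :
  spn s u -> spn s v -> spn s (u + v).
Proof. by move=> hu hv; rewrite -[u]scale1r; apply: spnL. Qed.

Lemma spnZ (R : realType) (B : normedModType R) (s : seq B) a u :
  spn s u -> spn s (a *: u).
Proof. by move=> hu; rewrite -[_ *: u]addr0; apply: spnL => //; apply: spn0. Qed.

Lemma spnN (R : realType) (B : normedModType R) (s : seq B) u :
  spn s u -> spn s (- u).
Proof. by move=> hu; rewrite -scaleN1r; apply: spnZ. Qed.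

Lemma spn_cons (R : realType) (B : normedModType R) (s : seq B) x u :
  spn (x :: s) u <-> exists a v, spn s v /\ u = a *: x + v.
Proof.
split.
  by move=> [c ->]; exists (c 0%N), (lc (fun i => c i.+1) s); split => //; exists (fun i => c i.+1).
move=> [a [v [[c ->] ->]]]; exists (fun i => if i is i'.+1 then c i' else a) => /=.
by [].
Qed.

Lemma fd_spn (R : realType) (B : normedModType R) n (e : 'I_n -> B) :
  exists s : seq B, forall u, (exists c : 'I_n -> R, u = \sum_(i < n) c i *: e i) -> spn s u.
Proof.
elim: n e => [|n IH] e.
  by exists [::] => u [c ->]; rewrite big_ord0; apply: spn0.
have [s Hs] := IH (fun i => e (lift ord0 i)).
exists (e ord0 :: s) => u [c ->]; rewrite big_ord_recl; apply/spn_cons.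
exists (c ord0), (\sum_(i < n) c (lift ord0 i) *: e (lift ord0 i)); split => //.
by apply: Hs; exists (fun i => c (lift ord0 i)).
Qed.

Lemma sub_spn (R : realType) (B : normedModType R) (V : set B) :
  V 0 -> (forall a u v, V u -> V v -> V (a *: u + v)) ->
  forall s : seq B, exists f : seq B, (forall x, x \in f -> V x) /\
    forall u, V u -> spn s u -> spn f u.
Proof.
move=> V0 VL; have VN : forall u, V u -> V (- u).
  by move=> u Vu; rewrite -[- u]addr0 -scaleN1r; apply: VL.
have VD : forall u v, V u -> V v -> V (u + v).
  by move=> u v Vu Vv; rewrite -[u]scale1r; apply: VL.
elim => [|x s [f' [Hf' Hs]]].
  by exists [::]; split => // u _ [c ->]; apply: spn0.
case: (pselect (exists v a w, V v /\ spn s w /\ a != 0 /\ v = a *: x + w)).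
  move=> [v [a [w [Vv [sw [a0 ev]]]]]].
  exists (v :: f'); split.
    by move=> z; rewrite inE => /orP [/eqP -> //|]; apply: Hf'.
  move=> u Vu /spn_cons [b [z [sz eu]]]; apply/spn_cons.
  exists (b / a), (u - (b / a) *: v); split; last by rewrite addrC subrK.
  apply: Hs; first by apply: VD => //; apply: VN; rewrite -[_ *: v]addr0; apply: VL.
  have -> : u - (b / a) *: v = z + (- (b / a)) *: w.
    rewrite eu ev scalerDr scalerA mulrVK ?unitfE // scaleNr.
    by rewrite opprD addrACA subrr add0r.
  by apply: spnD => //; apply: spnZ.
move=> Hn; exists f'; split => // u Vu /spn_cons [b [z [sz eu]]].
case: (eqVneq b 0) => [b0|b0].
  by apply: Hs => //; move: eu; rewrite b0 scale0r add0r => ->.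
by exfalso; apply: Hn; exists u, b, z.
Qed.

Lemma he_small (R : realType) (e : R) : 0 < e ->
  exists N, forall k, (N <= k)%N -> (k.+1%:R)^-1 < e.
Proof.
move=> e0; have [N _ HN] := near_infty_natSinv_lt (PosNum e0).
by exists N => k Nk; apply: HN.
Qed.

Lemma closure_eps (R : realType) (B : normedModType R) (A : set B) z :
  closure A z -> forall e, 0 < e -> exists w, A w /\ `|z - w| < e.
Proof.
move=> cz e e0; have [w [Aw bw]] := cz _ (nbhsx_ballx z e e0).
by exists w; split => //; move: bw; rewrite -ball_normE.
Qed.

Lemma eps_closure (R : realType) (B : normedModType R) (A : set B) z :
  (forall e, 0 < e -> exists w, A w /\ `|z - w| < e) -> closure A z.
Proof.
move=> H U /nbhs_ballP [e e0 Ue]; have [w [Aw zw]] := H e e0.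
by exists w; split => //; apply: Ue; rewrite -ball_normE.
Qed.

Lemma dist_pos (R : realType) (B : normedModType R) (s : seq B) x :
  closed (spn s) -> ~ spn s x ->
  exists2 d, 0 < d & forall y, spn s y -> d <= `|x - y|.
Proof.
move=> cs nx.
have : nbhs x (~` spn s).
  by apply: open_nbhs_nbhs; split => //; apply: closed_openC.
move=> /nbhs_ballP [d d0 Hd]; exists d => // y sy.
rewrite leNgt; apply/negP => h; apply: (Hd y) => //.
by rewrite -ball_normE.
Qed.

Lemma scale_bound (R : realType) (B : normedModType R) (s : seq B) x d :
  0 < d -> (forall y, spn s y -> d <= `|x - y|) ->
  forall a y, spn s y -> `|a| * d <= `|a *: x + y|.
Proof.
move=> d0 Hd a y sy; case: (eqVneq a 0) => [->|a0].
  by rewrite normr0 mul0r.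
have -> : a *: x + y = a *: (x - (- a^-1) *: y).
  by rewrite scaleNr opprK scalerDr scalerA mulfV // scale1r.
rewrite normrZ ler_wpM2l //; apply: Hd; exact: spnZ.
Qed.

Lemma zid1 (V : zmodType) (z p q yk ym : V) : p - q + (yk - ym) = z - (q + ym) - (z - (p + yk)).
Proof. by rewrite opprB [RHS]addrC [RHS]addrA subrK opprD addrACA. Qed.
Lemma zid2 (V : zmodType) (z p q yk : V) : z - q - yk = (z - (p + yk)) + (p - q).
Proof. by rewrite [in RHS]opprD [in RHS]addrA [z + (- p - yk)]addrA [z - p - yk + p]addrAC subrK addrAC. Qed.

Lemma spn_closed (R : realType) (B : normedModType R) (s : seq B) :
  closed (spn s).
Proof.
elim: s => [|x s IH].
  move=> z cz; suff -> : z = 0 by apply: spn0.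
  apply/eqP; rewrite -normr_eq0; apply/eqP; apply/le_anti; rewrite normr_ge0 andbT.
  apply/ler_addgt0Pr => e e0; rewrite add0r.
  have [w [[c ->] zw]] := closure_eps cz e0.
  by move: zw => /= ; rewrite subr0 => /ltW.
case: (pselect (spn s x)) => [sx|nx].
  have sub : spn (x :: s) `<=` spn s.
    move=> u /spn_cons [a [v [sv ->]]]; exact: spnL.
  move=> z /(closureS sub) /IH sz; apply/spn_cons.
  by exists 0, z; split => //; rewrite scale0r add0r.
have [d d0 Hd] := dist_pos IH nx.
have SB := scale_bound d0 Hd.
move=> z cz.
have : forall k : nat, exists p : R * B, spn s p.2 /\
    `|z - (p.1 *: x + p.2)| < (k.+1%:R)^-1.
  move=> k; have hk0 : 0 < (k.+1%:R)^-1 :> R by rewrite invr_gt0 ltr0Sn.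
  have [w [/spn_cons [a [v [sv ->]]] zw]] := closure_eps cz hk0.
  by exists (a, v).
move=> /choice [f Hf].
pose a k := (f k).1; pose y k := (f k).2.
have Hc : forall k m, `|a k - a m| * d < (k.+1%:R)^-1 + (m.+1%:R)^-1.
  move=> k m.
  have := SB (a k - a m) (y k - y m) (spnD (proj1 (Hf k)) (spnN (proj1 (Hf m)))).
  move/le_lt_trans; apply.
  have -> : (a k - a m) *: x + (y k - y m) =
     (z - (a m *: x + y m)) - (z - (a k *: x + y k)).
    by rewrite scalerBl (zid1 z).
  rewrite (le_lt_trans (ler_normB _ _)) // addrC.
  by apply: ltrD; [exact: (proj2 (Hf k)) | exact: (proj2 (Hf m))].
have : cvg (a @ \oo).
  apply/cauchy_cvgP; apply: cauchy_exP => eps eps0.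
  have [N HN] := he_small (divr_gt0 (mulr_gt0 eps0 d0) (ltr0Sn R 1)).
  exists (a N); exists N => // k /= Nk.
  rewrite -ball_normE /= -(ltr_pM2r d0); apply: (lt_trans (Hc N k)).
  have h1 := HN N (leqnn N); have h2 := HN k Nk.
  by move: (ltrD h1 h2); rewrite -splitr.
move=> /cvg_ex [a0 Ha0].
have sz : spn s (z - a0 *: x).
  apply: IH; apply: eps_closure => e e0.
  have e1 : 0 < e / 2 / (`|x| + 1) by rewrite divr_gt0 ?divr_gt0 // ltr_wpDl.
  have [N1 _ HN1] := proj1 (cvgrPdist_lt _ _) Ha0 _ e1.
  have [N2 HN2] := he_small (divr_gt0 e0 (ltr0Sn R 1)).
  pose k := maxn N1 N2.
  have k1 : (N1 <= k)%N by rewrite leq_maxl.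
  have k2 : (N2 <= k)%N by rewrite leq_maxr.
  exists (y k); split; first exact: (proj1 (Hf k)).
  have -> : z - a0 *: x - y k = (z - (a k *: x + y k)) + (a k - a0) *: x.
    by rewrite scalerBl -zid2.
  rewrite (le_lt_trans (ler_normD _ _)) // [e]splitr; apply: ltr_leD.
    exact: lt_trans (proj2 (Hf k)) (HN2 k k2).
  rewrite normrZ distrC.
  have hk := HN1 k k1; rewrite /= in hk.
  apply: le_trans (ler_wpM2r (normr_ge0 x) (ltW hk)) _.
  have x1 : 0 < `|x| + 1 by rewrite ltr_wpDl.
  rewrite -[e / 2 / _ * _]mulrA; apply: ler_piMr; first by rewrite ltW // divr_gt0.
  by rewrite mulrC ler_pdivrMr // mul1r lerDl.
apply/spn_cons; exists a0, (z - a0 *: x); split => //.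
by rewrite addrC subrK.
Qed.

Lemma bounded_rep (R : realType) (B : normedModType R) (s : seq B) :
  exists C : R, 0 < C /\ forall u, spn s u ->
    exists c, u = lc c s /\ forall i, `|c i| <= C * `|u|.
Proof.
elim: s => [|x s [C' [C'0 IH]]].
  exists 1; split => // u [c ->] /=; exists (fun _ => 0); split => // i.
  by rewrite normr0 mul1r normr_ge0.
case: (pselect (spn s x)) => [sx|nx].
  exists C'; split => // u /spn_cons [a [v [sv eu]]].
  have su : spn s u by rewrite eu; apply: spnL.
  have [c [ec bc]] := IH u su.
  exists (fun i => if i is i'.+1 then c i' else 0); split.
    by rewrite /= scale0r add0r.
  by case=> [|i] //; rewrite normr0 mulr_ge0 // ltW.
have [d d0 Hd] := dist_pos (@spn_closed _ _ s) nx.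
have SB := scale_bound d0 Hd.
exists (d^-1 + C' * (1 + `|x| / d)); split.
  have h1 : 0 <= `|x| / d by rewrite divr_ge0 // ltW.
  have h2 : 0 < 1 + `|x| / d by rewrite (lt_le_trans ltr01) // lerDl.
  by rewrite addr_gt0 ?invr_gt0 // mulr_gt0.
move=> u /spn_cons [a [v [sv eu]]].
have ha : `|a| <= d^-1 * `|u|.
  by rewrite mulrC ler_pdivlMr // eu; apply: SB.
have [c [ec bc]] := IH v sv.
have hv : `|v| <= (1 + `|x| / d) * `|u|.
  have -> : v = u - a *: x by rewrite eu addrC addKr.
  apply: le_trans (ler_normB _ _) _; rewrite normrZ mulrDl mul1r lerD2l.
  apply: le_trans (ler_wpM2r (normr_ge0 x) ha) _.
  by rewrite mulrAC [d^-1 * _]mulrC.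
have C'0' : 0 <= C' by exact: ltW.
have du : 0 <= d^-1 * `|u| by rewrite mulr_ge0 // invr_ge0 (ltW d0).
exists (fun i => if i is i'.+1 then c i' else a); split.
  by rewrite /= eu ec.
case=> [|i].
  by apply: le_trans ha _; rewrite mulrDl lerDl mulr_ge0 // mulr_ge0 // addr_ge0 // divr_ge0 // (ltW d0).
apply: le_trans (bc i) _; rewrite mulrDl -mulrA.
apply: le_trans (ler_wpM2l C'0' hv) _; by rewrite lerDr.
Qed.

Unset Implicit Arguments. Unset Strict Implicit.

Theorem mainTheorem9 (R : realType) (S T : set R)
  (Y : pseudoMetricType R) (sigma : R -> Y -> Y)
  (B : completeNormedModType R) (phi : R -> B -> Y -> B) :
  hausdorff_space Y ->
  is_time_set S -> is_time_semigroup S T ->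
  dynamical_system S sigma ->
  linear_cocycle T sigma phi ->
  finite_dimensional B ->
  forall y : Y, exists L : R, 0 < L /\
    forall t : R, T t -> 0 <= t ->
    forall u : B, bounded_forward_set T phi y u -> `|phi t u y| <= L * `|u|.
Proof.
move=> _ _ _ _ [_ [_ [_ Hlin]]] [n [e He]] y.
pose V := bounded_forward_set T phi y.
have Phi0 : forall t, T t -> phi t 0 y = 0.
  move=> t Tt; have h := Hlin t y Tt 1 0 0.
  rewrite scale1r addr0 scale1r in h.
  by apply: (@addrI _ (phi t 0 y)); rewrite addr0 -h.
have V0 : V 0.
  by exists 0 => t Tt _; rewrite Phi0 // normr0.
have VL : forall a u v, V u -> V v -> V (a *: u + v).
  move=> a u v [M1 H1] [M2 H2]; exists (`|a| * M1 + M2) => t Tt t0.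
  rewrite Hlin //; apply: le_trans (ler_normD _ _) _.
  rewrite normrZ; apply: lerD; last exact: H2.
  by apply: ler_wpM2l => //; apply: H1.
have [s Hs] := fd_spn e.
have [f [Vf Hf]] := sub_spn V0 VL s.
have [C [C0 HC]] := bounded_rep f.
have Hb : forall f' : seq B, (forall x, x \in f' -> V x) -> exists M : R, 0 <= M /\
    forall t, T t -> 0 <= t -> forall c K, (forall i, `|c i| <= K) ->
      `|phi t (lc c f') y| <= K * M.
  elim => [|x f' IH] Vf'.
    exists 0; split => // t Tt t0 c K _ /=; by rewrite Phi0 // normr0 mulr0.
  have [M' [M'0 HM']] : exists M : R, 0 <= M /\
    forall t, T t -> 0 <= t -> forall c K, (forall i, `|c i| <= K) ->
      `|phi t (lc c f') y| <= K * M.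
    by apply: IH => z zf; apply: Vf'; rewrite inE zf orbT.
  have [Mx HMx] : V x by apply: Vf'; rewrite inE eqxx.
  exists (`|Mx| + M'); split; first by rewrite addr_ge0.
  move=> t Tt t0 c K Hc /=.
  have K0 : 0 <= K by apply: le_trans (Hc 0%N).
  rewrite Hlin //; apply: le_trans (ler_normD _ _) _.
  rewrite normrZ mulrDr; apply: lerD; last by apply: HM' => // i; apply: Hc.
  apply: le_trans (ler_wpM2l (normr_ge0 _) (HMx t Tt t0)) _.
  apply: le_trans (ler_wpM2l (normr_ge0 _) (ler_norm Mx)) _.
  by apply: ler_wpM2r => //; apply: Hc.
have [M [M0 HM]] := Hb f Vf.
exists (C * M + 1); split; first by rewrite ltr_wpDl // mulr_ge0 // ltW.
move=> t Tt t0 u Vu.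
have [c [ec bc]] := HC u (Hf u Vu (Hs u (He u))).
rewrite {1}ec; apply: le_trans (HM t Tt t0 c _ bc) _.
rewrite mulrC mulrA ler_wpM2r //.
by rewrite mulrC lerDl.
Qed.
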